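(* Let $(\mathcal T,\{x_I\},\{r_I\})$ be a triple as below with $\mathcal T\subseteq\Sigma_N$ non-empty and closed and $s>0$. (a) If the triple is an $s$-tree (i.e. satisfies (T1)–(T5)), then it satisfies (T'3) with $E=1$. (b) Conversely, if the triple satisfies (T1), (T2), (T'3) (with some constant $E$), (T4), (T5), then there are numbers $\tilde r_I$, $I\in\mathcal T^*$, with $E^{-1/s}r_I\le\tilde r_I\le E^{1/s}r_I$ for all $I\in\mathcal T^*$, such that $(\mathcal T,\{x_I\},\{\tilde r_I\})$ satisfies (T1)–(T5) (with suitably modified constants), i.e. is an $s$-tree.
   Context: Words: $A_N=\{0,\dots,N-1\}$, $\Sigma_N=A_N^{\mathbb N}$ with product topology; for $\mathcal T\subseteq\Sigma_N$, $\mathcal T^*$ is the set of finite prefixes $\omega|_k$ ($k\ge0$) of elements of $\mathcal T$, $\mathcal T_k$ those of length $k$; $\prec$ is the prefix relation; $IJ$ concatenation; finite words $I,J$, $|I|\le|J|$, are incomparable if $I_k\ne J_k$ for some $k\le |I|$. Conditions for $x_I\in X$ ($X$ metric space), $0<r_I<\infty$, with constants $\rho,C,D\in(0,\infty)$: (T1) $d(x_I,x_J)\ge C(r_I+r_J)$ for incomparable $I,J\in\mathcal T^*$; (T2) $\operatorname{diam}\{x_{IJ}:IJ\in\mathcal T^*\}\le Dr_I$; (T3) $\sum_{|J|=n,\,IJ\in\mathcal T^*}r_{IJ}^s=r_I^s$ for all $I\in\mathcal T^*$, $n\ge0$; (T4) $r_I\to0$ as $|I|\to\infty$; (T5) $r_{Ij}\ge\rho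 r_I$ whenever $j\in A_N$, $Ij\in\mathcal T^*$. For $I\in\mathcal T^*$ and $n\ge0$ let $\mathcal T^n_I$ be the collection of all sets $\mathcal I\subseteq\bigcup_{k\ge n}\mathcal T_k$ such that every $\omega\in\mathcal T$ has exactly one $J\in\mathcal I$ with $J\prec\omega$, and some $J\in\mathcal I$ satisfies $I\prec J$. (T'3): there is $0<E<\infty$ such that for all $I\in\mathcal T^*$, $n\ge0$ and $\mathcal I\in\mathcal T^n_I$, $\frac1E r_I^s\le\sum_{J:\,IJ\in\mathcal I}r_{IJ}^s\le Er_I^s$. *)

(* Defs.v *)
From Stdlib Require Import Reals List.
Import ListNotations.
Open Scope R_scope.

Definition inSigma (N : nat) (w : nat -> nat) : Prop := forall k, (w k < N)%nat.

Definition pre (w : nat -> nat) (k : nat) : list nat := map w (seq 0 k).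

(* T closed in the product topology: the complement is open, i.e. every
   w in Sigma_N \ T has a cylinder neighbourhood [w|_k] disjoint from T. *)
Definition closedT (N : nat) (T : (nat -> nat) -> Prop) : Prop :=
  forall w, inSigma N w -> ~ T w ->
    exists k, forall v, inSigma N v -> pre v k = pre w k -> ~ T v.

Definition Tstar (T : (nat -> nat) -> Prop) (I : list nat) : Prop :=
  exists w k, T w /\ I = pre w k.

Definition prefw (J : list nat) (w : nat -> nat) : Prop := pre w (length J) = J.

Definition prefl (I J : list nat) : Prop := exists K, J = I ++ K.

Definition incomparable (I J : list nat) : Prop :=
  exists k, (k < length I)%nat /\ (k < length J)%nat /\ nth k I 0%nat <> nth k J 0%nat.

Definition is_metric {X : Type} (d : X -> X -> R) : Prop :=
  (forall x y, 0 <= d x y) /\ (forall x y, d x y = 0 <-> x = y) /\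
  (forall x y, d x y = d y x) /\ (forall x y z, d x z <= d x y + d y z).

Fixpoint lsum (f : list nat -> R) (l : list (list nat)) : R :=
  match l with [] => 0 | a :: l' => f a + lsum f l' end.

(* psum P f S : S is the (possibly infinite) sum of the nonnegative family
   f over {J | P J}, i.e. the supremum of its finite partial sums. *)
Definition psum (P : list nat -> Prop) (f : list nat -> R) (S : R) : Prop :=
  is_lub (fun y => exists l, NoDup l /\ (forall J, In J l -> P J) /\ y = lsum f l) S.

Section Conds.
Variables (T : (nat -> nat) -> Prop) (X : Type) (d : X -> X -> R)
          (x : list nat -> X) (r : list nat -> R) (s : R).

Definition T1 (C : R) : Prop :=
  forall I J, Tstar T I -> Tstar T J -> incomparable I J ->
    d (x I) (x J) >= C * (r I + r J).

Definition T2 (D : R) : Prop :=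
  forall I J1 J2, Tstar T I -> Tstar T (I ++ J1) -> Tstar T (I ++ J2) ->
    d (x (I ++ J1)) (x (I ++ J2)) <= D * r I.

Definition T3 : Prop :=
  forall I n, Tstar T I ->
    psum (fun J => length J = n /\ Tstar T (I ++ J))
         (fun J => Rpower (r (I ++ J)) s) (Rpower (r I) s).

Definition T4 : Prop :=
  forall eps, 0 < eps -> exists n, forall I, Tstar T I -> (n <= length I)%nat -> r I < eps.

Definition T5 (N : nat) (rho : R) : Prop :=
  forall I j, (j < N)%nat -> Tstar T (I ++ [j]) -> r (I ++ [j]) >= rho * r I.

Definition cutset (n : nat) (I : list nat) (Ic : list nat -> Prop) : Prop :=
  (forall J, Ic J -> Tstar T J /\ (n <= length J)%nat) /\
  (forall w, T w -> exists J, Ic J /\ prefw J w /\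
                  forall J', Ic J' -> prefw J' w -> J' = J) /\
  (exists J, Ic J /\ prefl I J).

Definition T'3 (E : R) : Prop :=
  forall I n Ic, Tstar T I -> cutset n I Ic ->
    exists S, psum (fun J => Ic (I ++ J)) (fun J => Rpower (r (I ++ J)) s) S /\
      / E * Rpower (r I) s <= S /\ S <= E * Rpower (r I) s.

Definition s_tree (N : nat) : Prop :=
  (forall I, Tstar T I -> 0 < r I) /\
  exists rho C D, 0 < rho /\ 0 < C /\ 0 < D /\
    T1 C /\ T2 D /\ T3 /\ T4 /\ T5 N rho.
End Conds.

(* Main.v *)
Require Import Defs.
From Stdlib Require Import Reals List Lra Lia ClassicalEpsilon Classical FinFun.
Import ListNotations.
Open Scope R_scope.
Local Notation pre := Defs.pre.

Fixpoint gs {A} (f : A -> R) (l : list A) : R :=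
  match l with [] => 0 | a :: l' => f a + gs f l' end.

Lemma lsum_gs f l : lsum f l = gs f l.
Proof. induction l; simpl; auto; rewrite IHl; auto. Qed.

Lemma gs_app {A} (f : A -> R) l1 l2 : gs f (l1 ++ l2) = gs f l1 + gs f l2.
Proof. induction l1; simpl; [lra|rewrite IHl1; lra]. Qed.

Lemma gs_map {A B} (f : B -> R) (g : A -> B) l : gs f (map g l) = gs (fun a => f (g a)) l.
Proof. induction l; simpl; auto; rewrite IHl; auto. Qed.

Lemma gs_flat_map {A B} (f : B -> R) (g : A -> list B) l :
  gs f (flat_map g l) = gs (fun a => gs f (g a)) l.
Proof. induction l; simpl; auto; rewrite gs_app, IHl; auto. Qed.

Lemma gs_ext {A} (f g : A -> R) l : (forall a, In a l -> f a = g a) -> gs f l = gs g l.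
Proof. induction l; simpl; intros H; auto. rewrite H, IHl; auto. Qed.

Lemma gs_nonneg {A} (f : A -> R) l : (forall a, In a l -> 0 <= f a) -> 0 <= gs f l.
Proof. induction l; simpl; intros H; [lra|]. pose proof (H a (or_introl eq_refl)).
  pose proof (IHl (fun x h => H x (or_intror h))). lra. Qed.

Lemma gs_le {A} (f g : A -> R) l : (forall a, In a l -> f a <= g a) -> gs f l <= gs g l.
Proof. induction l; simpl; intros H; [lra|]. pose proof (H a (or_introl eq_refl)).
  pose proof (IHl (fun x h => H x (or_intror h))). lra. Qed.

Lemma gs_plus {A} (f g : A -> R) l : gs (fun a => f a + g a) l = gs f l + gs g l.
Proof. induction l; simpl; [lra|rewrite IHl; lra]. Qed.

Lemma gs_remove_le {A} (dec : forall x y : A, {x = y} + {x <> y}) (f : A -> R) x b :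
  (forall y, In y b -> 0 <= f y) -> gs f (remove dec x b) <= gs f b.
Proof.
  induction b as [|y b IH]; simpl; intros H; [lra|].
  pose proof (H y (or_introl eq_refl)).
  pose proof (IH (fun z h => H z (or_intror h))).
  destruct (dec x y); simpl; lra.
Qed.

Lemma gs_remove {A} (dec : forall x y : A, {x = y} + {x <> y}) (f : A -> R) x b :
  In x b -> (forall y, In y b -> 0 <= f y) -> f x + gs f (remove dec x b) <= gs f b.
Proof.
  induction b as [|y b IH]; simpl; intros Hin H; [contradiction|].
  pose proof (H y (or_introl eq_refl)).
  assert (H' : forall z, In z b -> 0 <= f z) by (intros; apply H; auto).
  destruct (dec x y) as [->|n].
  - pose proof (gs_remove_le dec f y b H'). lra.
  - destruct Hin as [->|Hin]; [congruence|]. simpl. pose proof (IH Hin H'). lra.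
Qed.

Lemma gs_incl {A} (dec : forall x y : A, {x = y} + {x <> y}) (f : A -> R) (a b : list A) :
  NoDup a -> (forall x, In x b -> 0 <= f x) ->
  (forall x, In x a -> f x <> 0 -> In x b) -> gs f a <= gs f b.
Proof.
  revert b. induction a as [|x a IH]; simpl; intros b Hnd Hb Hinc.
  - apply gs_nonneg; auto.
  - inversion Hnd; subst.
    destruct (Req_dec (f x) 0) as [E|E].
    + rewrite E. assert (gs f a <= gs f b); [|lra].
      apply IH; auto.
    + pose proof (gs_remove dec f x b (Hinc x (or_introl eq_refl) E) Hb).
      assert (gs f a <= gs f (remove dec x b)); [|lra].
      apply IH; auto.
      * intros y Hy. apply Hb. apply in_remove in Hy. tauto.
      * intros y Hy Hfy. apply in_in_remove.
        -- intro; subst; contradiction.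
        -- apply Hinc; auto.
Qed.

Lemma NoDup_flat_map' {A B} (g : A -> list B) l :
  NoDup l -> (forall a, In a l -> NoDup (g a)) ->
  (forall a b y, In a l -> In b l -> In y (g a) -> In y (g b) -> a = b) ->
  NoDup (flat_map g l).
Proof.
  induction l as [|a l IH]; simpl; intros Hnd Hg Hdis; [constructor|].
  inversion Hnd; subst. apply NoDup_app.
  - apply Hg; auto.
  - apply IH; auto. intros a0 b y ? ? ? ?; eapply Hdis; eauto.
  - intros y Hy1 Hy2. apply in_flat_map in Hy2 as [b [Hb Hyb]].
  assert (a = b) by (eapply Hdis; eauto). subst; contradiction.
Qed.

Definition ldec := list_eq_dec Nat.eq_dec.

Lemma psum_fin (P : list nat -> Prop) f A :
  NoDup A -> (forall J, P J <-> In J A) -> (forall J, In J A -> 0 <= f J) ->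
  psum P f (lsum f A).
Proof.
  intros Hnd HP Hf. unfold psum, is_lub, is_upper_bound. split.
  - intros y [l [Hl [HlP ->]]]. rewrite !lsum_gs. apply (gs_incl ldec); auto.
    intros x Hx _. apply HP; auto.
  - intros b Hb. apply Hb. exists A. split; [auto|split; [|auto]].
    intros J HJ; apply HP; auto.
Qed.

Lemma psum_unique P f S1 S2 : psum P f S1 -> psum P f S2 -> S1 = S2.
Proof.
  unfold psum, is_lub. intros [H1 H1'] [H2 H2']. apply Rle_antisym; [apply H1'|apply H2']; auto.
Qed.

Lemma pre_length w k : length (pre w k) = k.
Proof. unfold pre. rewrite length_map, length_seq. auto. Qed.

Lemma pre_add w a b : pre w (a + b) = pre w a ++ map w (seq a b).
Proof. unfold pre. rewrite seq_app, map_app. reflexivity. Qed.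

Lemma pre_S w k : pre w (S k) = pre w k ++ [w k].
Proof. replace (S k) with (k + 1)%nat by lia. rewrite pre_add. reflexivity. Qed.

Lemma nth_pre w k i : (i < k)%nat -> nth i (pre w k) 0%nat = w i.
Proof.
  intros. rewrite (nth_indep _ _ (w 0%nat)) by (rewrite pre_length; lia).
  unfold pre. rewrite map_nth, seq_nth; auto.
Qed.

Lemma app_same_len {A} (a b c d : list A) : a ++ b = c ++ d -> length a = length c -> a = c /\ b = d.
Proof.
  intros H L. apply app_eq_app in H as [l [[H1 H2]|[H1 H2]]]; subst;
  rewrite length_app in L; destruct l; simpl in *; try lia; rewrite app_nil_r; auto.
Qed.

Lemma prefw_pre w k : prefw (pre w k) w.
Proof. unfold prefw. rewrite pre_length. auto. Qed.

Lemma prefl_pre w a b : (a <= b)%nat -> prefl (pre w a) (pre w b).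
Proof.
  intros H. exists (map w (seq a (b - a))). replace b with (a + (b - a))%nat at 1 by lia.
  apply pre_add.
Qed.

Lemma prefl_len I K : prefl I K -> (length I <= length K)%nat.
Proof. intros [X ->]. rewrite length_app. lia. Qed.

Lemma prefl_eq I K : prefl I K -> (length K <= length I)%nat -> K = I.
Proof. intros [X ->] H. rewrite length_app in H. destruct X; simpl in *; [apply app_nil_r|lia]. Qed.

Lemma prefl_refl I : prefl I I.
Proof. exists []. rewrite app_nil_r; auto. Qed.

Lemma prefl_app I J : prefl I (I ++ J).
Proof. exists J; auto. Qed.

Lemma prefl_trans I J K : prefl I J -> prefl J K -> prefl I K.
Proof. intros [X ->] [Y ->]. exists (X ++ Y). rewrite app_assoc; auto. Qed.

Lemma prefw_prefl I K w : prefl I K -> prefw K w -> prefw I w.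
Proof.
  intros [X ->] H. unfold prefw in *. rewrite length_app, pre_add in H.
  apply app_same_len in H as [H _]; auto. apply pre_length.
Qed.

Lemma prefw_comp J K w : prefw J w -> prefw K w -> (length J <= length K)%nat -> prefl J K.
Proof. unfold prefw. intros H1 H2 L. rewrite <- H1, <- H2. apply prefl_pre; auto. Qed.

Lemma prefw_len_eq J K w : prefw J w -> prefw K w -> length J = length K -> J = K.
Proof. unfold prefw. intros H1 H2 L. rewrite <- H1, <- H2, L. auto. Qed.

Lemma Tstar_iff T I : Tstar T I <-> exists w, T w /\ prefw I w.
Proof.
  split.
  - intros [w [k [Hw ->]]]. exists w. split; auto. apply prefw_pre.
  - intros [w [Hw H]]. exists w, (length I). split; auto.
Qed.

Lemma Tstar_prefl T I K : Tstar T K -> prefl I K -> Tstar T I.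
Proof.
  intros H P. apply Tstar_iff in H as [w [Hw H]]. apply Tstar_iff. exists w. split; auto.
  eapply prefw_prefl; eauto.
Qed.

Lemma Tstar_lt N T (hT : forall w, T w -> inSigma N w) K :
  Tstar T K -> forall i, In i K -> (i < N)%nat.
Proof.
  intros [w [k [Hw ->]]] i Hi. unfold pre in Hi. apply in_map_iff in Hi as [m [<- _]].
  apply hT; auto.
Qed.

Lemma prefl_app_inv I J K : prefl (I ++ J) (I ++ K) -> prefl J K.
Proof. intros [X H]. exists X. rewrite <- app_assoc in H. apply app_inv_head in H. auto. Qed.

Lemma prefl_snoc K j K2 : prefl K K2 -> (length K < length K2)%nat ->
  nth (length K) K2 0%nat = j -> prefl (K ++ [j]) K2.
Proof.
  intros [X ->] L H. rewrite length_app in L. destruct X as [|x X]; simpl in L; [lia|].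
  rewrite nth_middle in H. subst. exists X. rewrite <- app_assoc. auto.
Qed.

Lemma prefl_snoc_inv K j K2 : prefl (K ++ [j]) K2 ->
  prefl K K2 /\ (length K < length K2)%nat /\ nth (length K) K2 0%nat = j.
Proof.
  intros [X ->]. split; [exists ([j] ++ X); rewrite app_assoc; auto|].
  rewrite !length_app. simpl. split; [lia|]. rewrite <- app_assoc. simpl. apply nth_middle.
Qed.

Fixpoint words (N k : nat) : list (list nat) :=
  match k with
  | O => [[]]
  | S k => flat_map (fun J => map (fun j => J ++ [j]) (seq 0 N)) (words N k)
  end.

Lemma in_words N k J : In J (words N k) <-> length J = k /\ (forall i, In i J -> (i < N)%nat).
Proof.
  revert J; induction k as [|k IH]; intros J; simpl.
  - split.
    + intros [<-|[]]. simpl. split; auto. intros _ [].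
    + intros [L _]. destruct J; simpl in L; [auto|lia].
  - rewrite in_flat_map. split.
    + intros [J0 [HJ0 Hin]]. apply in_map_iff in Hin as [j [<- Hj]].
      apply in_seq in Hj. apply IH in HJ0 as [L H]. rewrite length_app. simpl.
      split; [lia|]. intros i Hi. apply in_app_or in Hi as [Hi|[<-|[]]]; auto; lia.
    + intros [L H]. destruct J as [|a J']; [simpl in L; lia|].
      destruct (exists_last (l := a :: J') ltac:(discriminate)) as [J0 [j E]].
      rewrite E in *. exists J0. rewrite length_app in L. simpl in L. split.
      * apply IH. split; [lia|]. intros i Hi. apply H. apply in_or_app; auto.
      * apply in_map_iff. exists j. split; auto. apply in_seq.
        assert (j < N)%nat by (apply H; apply in_or_app; simpl; auto). lia.
Qed.

Lemma words_NoDup N k : NoDup (words N k).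
Proof.
  induction k as [|k IH]; simpl.
  - constructor; [intros []|constructor].
  - apply NoDup_flat_map'; auto.
    + intros a _. apply Injective_map_NoDup; [|apply seq_NoDup].
      intros x y H. apply app_inj_tail in H. tauto.
    + intros a b y _ _ H1 H2. apply in_map_iff in H1 as [x [<- _]].
      apply in_map_iff in H2 as [z [E _]]. apply app_inj_tail in E. symmetry; tauto.
Qed.

Definition additive (N : nat) (phi : list nat -> R) : Prop :=
  forall K, phi K = gs (fun j => phi (K ++ [j])) (seq 0 N).

Lemma level_sum N phi : additive N phi -> forall m K,
  gs (fun J => phi (K ++ J)) (words N m) = phi K.
Proof.
  intros Ha m. induction m as [|m IH]; intros K; simpl.
  - rewrite app_nil_r. lra.
  - rewrite gs_flat_map. rewrite <- (IH K). apply gs_ext. intros J _.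
    rewrite gs_map. rewrite (Ha (K ++ J)). apply gs_ext. intros j _. rewrite app_assoc. auto.
Qed.

Definition decb (P : Prop) : bool := if excluded_middle_informative P then true else false.

Lemma decb_true P : decb P = true <-> P.
Proof. unfold decb. destruct (excluded_middle_informative P); split; auto; discriminate. Qed.

Lemma gs_filter {A} (g : A -> R) (p : A -> bool) l :
  (forall a, In a l -> p a = false -> g a = 0) -> gs g (filter p l) = gs g l.
Proof.
  induction l as [|a l IH]; simpl; intros H; auto.
  destruct (p a) eqn:E; simpl; rewrite IH; auto. rewrite (H a); auto. lra.
Qed.

Lemma psum_fin2 (P : list nat -> Prop) f g A :
  NoDup A -> (forall J, P J -> In J A) -> (forall J, In J A -> 0 <= g J) ->
  (forall J, P J -> g J = f J) -> (forall J, In J A -> ~ P J -> g J = 0) ->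
  psum P f (gs g A).
Proof.
  intros Hnd HPA Hg Hgf Hz. unfold psum, is_lub, is_upper_bound. split.
  - intros y [l [Hl [HlP ->]]]. rewrite lsum_gs.
    rewrite (gs_ext f g) by (intros; symmetry; auto).
    apply (gs_incl ldec); auto.
  - intros b Hb. apply Hb. exists (filter (fun J => decb (P J)) A). split; [apply NoDup_filter; auto|].
    split.
    + intros J HJ. apply filter_In in HJ as [_ HJ]. apply decb_true; auto.
    + rewrite lsum_gs. rewrite (gs_ext f g).
      * symmetry. apply gs_filter. intros a Ha Hp. apply Hz; auto.
        intro HP. apply decb_true in HP. congruence.
      * intros J HJ. apply filter_In in HJ as [_ HJ]. symmetry; apply Hgf. apply decb_true; auto.
Qed.

Lemma gs_zero {A} (l : list A) : gs (fun _ => 0) l = 0.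
Proof. induction l; simpl; auto; lra. Qed.

Lemma gs_indicator c x N : (c < N)%nat ->
  gs (fun j => if Nat.eqb c j then x else 0) (seq 0 N) = x.
Proof.
  intros H. replace N with (c + (1 + (N - c - 1)))%nat by lia.
  rewrite !seq_app, !gs_app. simpl.
  rewrite Nat.eqb_refl.
  rewrite (gs_ext _ (fun _ => 0)). 2:{ intros j Hj. apply in_seq in Hj.
    destruct (Nat.eqb c j) eqn:E; auto. apply Nat.eqb_eq in E. lia. }
  rewrite (gs_ext _ (fun _ => 0) (seq (c + 1) _)). 2:{ intros j Hj. apply in_seq in Hj.
    destruct (Nat.eqb c j) eqn:E; auto. apply Nat.eqb_eq in E. lia. }
  rewrite !gs_zero. lra.
Qed.

Lemma gs_swap {A B} (f : A -> B -> R) la lb :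
  gs (fun a => gs (fun b => f a b) lb) la = gs (fun b => gs (fun a => f a b) la) lb.
Proof.
  induction la as [|a la IH]; simpl.
  - symmetry; apply gs_zero.
  - rewrite IH. rewrite <- gs_plus. auto.
Qed.

Lemma gs_partition (rho : list nat -> R) p N l :
  (forall K, In K l -> (nth p K 0%nat < N)%nat) ->
  gs rho l = gs (fun j => gs rho (filter (fun K => Nat.eqb (nth p K 0%nat) j) l)) (seq 0 N).
Proof.
  induction l as [|K l IH]; simpl; intros H.
  - symmetry. apply gs_zero.
  - transitivity (gs (fun j => (if Nat.eqb (nth p K 0%nat) j then rho K else 0) +
        gs rho (filter (fun K0 => Nat.eqb (nth p K0 0%nat) j) l)) (seq 0 N)).
    + rewrite gs_plus, gs_indicator by auto. rewrite IH by auto. reflexivity.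
    + apply gs_ext. intros j _. destruct (Nat.eqb (nth p K 0%nat) j); simpl; lra.
Qed.

Lemma prefl_comp a b K : prefl a K -> prefl b K -> prefl a b \/ prefl b a.
Proof.
  intros [X HX] [Y HY]. rewrite HX in HY. apply app_eq_app in HY as [l [[H1 _]|[H1 _]]].
  - right. exists l; auto.
  - left. exists l; auto.
Qed.

Lemma le_list_max l x : In x l -> (x <= list_max l)%nat.
Proof.
  intros H. pose proof (proj1 (list_max_le l (list_max l)) (le_n _)) as F.
  rewrite Forall_forall in F. auto.
Qed.

Lemma antichain_bound N phi : additive N phi -> (forall K, 0 <= phi K) ->
  (forall K, phi K <> 0 -> forall i, In i K -> (i < N)%nat) ->
  forall I A, NoDup A -> (forall a, In a A -> prefl I a) ->
  (forall a b, In a A -> In b A -> prefl a b -> a = b) -> gs phi A <= phi I.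
Proof.
  intros Ha Hpos Hsupp I A Hnd HI Hac.
  set (M := (list_max (map (@length nat) A) + length I)%nat).
  assert (HM : forall a, In a A -> (length a <= M)%nat).
  { intros a Ha'. unfold M. pose proof (le_list_max (map (@length nat) A) (length a)
      (in_map _ _ _ Ha')). lia. }
  transitivity (gs phi (flat_map (fun a => map (fun J => a ++ J) (words N (M - length a))) A)).
  - rewrite gs_flat_map. apply Req_le. apply gs_ext. intros a _. rewrite gs_map.
    symmetry. apply level_sum; auto.
  - rewrite <- (level_sum N phi Ha (M - length I) I). rewrite <- (gs_map phi (fun J => I ++ J)).
    apply (gs_incl ldec); auto.
    + apply NoDup_flat_map'; auto.
      * intros a _. apply Injective_map_NoDup; [|apply words_NoDup].
        intros x y H. apply app_inv_head in H; auto.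
      * intros a b y Ha' Hb' H1 H2.
        apply in_map_iff in H1 as [J1 [E1 HJ1]]. apply in_map_iff in H2 as [J2 [E2 HJ2]].
        apply in_words in HJ1 as [L1 _]. apply in_words in HJ2 as [L2 _].
        pose proof (HM a Ha'). pose proof (HM b Hb').
        assert (Pa : prefl a y) by (exists J1; auto).
        assert (Pb : prefl b y) by (exists J2; auto).
        destruct (prefl_comp a b y Pa Pb) as [P|P].
        -- apply Hac; auto.
        -- symmetry; apply Hac; auto.
    + intros x Hx Hnz. apply in_flat_map in Hx as [a [Ha' Hx]].
      apply in_map_iff in Hx as [J [<- HJ]]. apply in_words in HJ as [LJ _].
      destruct (HI a Ha') as [Y ->]. pose proof (HM _ Ha').
      apply in_map_iff. exists (Y ++ J). rewrite app_assoc. split; auto.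
      apply in_words. split.
      * rewrite length_app in *. lia.
      * intros i Hi. apply (Hsupp _ Hnz). rewrite <- app_assoc. apply in_or_app. right; auto.
Qed.

Lemma cut_antichain T n I Ic a b : cutset T n I Ic -> Ic a -> Ic b -> prefl a b -> a = b.
Proof.
  intros [Hel [Hcov _]] Ha Hb P.
  destruct (Hel b Hb) as [Tb _]. apply Tstar_iff in Tb as [w [Hw Pw]].
  destruct (Hcov w Hw) as [J [HJ [_ Hu]]].
  rewrite (Hu a Ha), (Hu b Hb); auto. eapply prefw_prefl; eauto.
Qed.

Lemma cut_ext T n I Ic K' K : cutset T n I Ic -> Ic K' -> prefl K' K -> prefl I K -> prefl I K'.
Proof.
  intros HC HK' P1 P2. destruct (prefl_comp K' I K P1 P2) as [P|P]; auto.
  destruct HC as [Hel [Hcov [J0 [HJ0 PJ0]]]].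
  destruct (Hel J0 HJ0) as [TJ0 _]. apply Tstar_iff in TJ0 as [w [Hw Pw]].
  destruct (Hcov w Hw) as [J1 [_ [_ Hu]]].
  assert (K' = J0).
  { rewrite (Hu K' HK'), (Hu J0 HJ0); auto. eapply prefw_prefl; [|eauto].
    eapply prefl_trans; eauto. }
  subst. exists []. rewrite app_nil_r. apply prefl_eq; auto. apply prefl_len; auto.
Qed.

Lemma bound_fin N (Q : nat -> nat -> Prop) :
  (forall j, (j < N)%nat -> exists m, Q j m) ->
  (forall j m m', Q j m -> (m <= m')%nat -> Q j m') ->
  exists M, forall j, (j < N)%nat -> Q j M.
Proof.
  intros H Hup. induction N as [|N IH].
  - exists 0%nat. intros; lia.
  - destruct IH as [M HM]; [intros; apply H; lia|].
    destruct (H N ltac:(lia)) as [m Hm].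
    exists (Nat.max M m). intros j Hj.
    destruct (Nat.eq_dec j N) as [->|ne].
    + eapply Hup; eauto; lia.
    + eapply Hup; [apply HM; lia|lia].
Qed.


Definition bad T (Ic : list nat -> Prop) K : Prop :=
  forall m, exists K2, Tstar T K2 /\ prefl K K2 /\ (m <= length K2)%nat /\
    forall K', Ic K' -> ~ prefl K' K2.

Lemma bad_step N T (hT : forall w, T w -> inSigma N w) Ic K :
  bad T Ic K -> exists j, (j < N)%nat /\ bad T Ic (K ++ [j]).
Proof.
  intros Hb. apply NNPP. intros Hn.
  assert (H : forall j, (j < N)%nat -> exists m, forall K2, Tstar T K2 -> prefl (K ++ [j]) K2 ->
     (m <= length K2)%nat -> exists K', Ic K' /\ prefl K' K2).
  { intros j Hj. apply NNPP. intros H1. apply Hn. exists j. split; auto.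
    intros m. apply NNPP. intros H2. apply H1. exists m. intros K2 T2 P2 L2.
    apply NNPP. intros H3. apply H2. exists K2. repeat split; auto.
    intros K' HK' PK'. apply H3. exists K'; auto. }
  destruct (bound_fin N _ H) as [M HM].
  { intros j m m' Hq Hle K2 T2 P2 L2. apply Hq; auto; lia. }
  destruct (Hb (Nat.max M (S (length K)))) as [K2 [T2 [P2 [L2 H2]]]].
  set (j := nth (length K) K2 0%nat).
  assert (Hj : (j < N)%nat).
  { apply (Tstar_lt N T hT K2 T2). apply nth_In. lia. }
  destruct (HM j Hj K2 T2) as [K' [HK' PK']].
  - apply prefl_snoc; auto. lia.
  - lia.
  - exact (H2 K' HK' PK').
Qed.

Lemma konig N T (hT : forall w, T w -> inSigma N w) (hC : closedT N T)
  (Ic : list nat -> Prop) :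
  (forall w, T w -> exists J, Ic J /\ prefw J w) ->
  exists m, forall K, Tstar T K -> length K = m -> exists K', Ic K' /\ prefl K' K.
Proof.
  intros Hcov. apply NNPP. intros Hn.
  assert (B0 : bad T Ic []).
  { intros m. apply NNPP. intros H1. apply Hn. exists m. intros K TK LK.
    apply NNPP. intros H2. apply H1. exists K. repeat split; auto.
    - exists K; auto.
    - lia.
    - intros K' HK' PK'. apply H2. exists K'; auto. }
  set (step := fun K => epsilon (inhabits 0%nat) (fun j => (j < N)%nat /\ bad T Ic (K ++ [j]))).
  assert (Hstep : forall K, bad T Ic K -> (step K < N)%nat /\ bad T Ic (K ++ [step K])).
  { intros K HK. unfold step. apply epsilon_spec. apply bad_step; auto. }
  set (path := fix path k := match k with O => [] | S k => path k ++ [step (path k)] end).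
  assert (Hp : forall k, bad T Ic (path k)).
  { induction k; simpl; auto. apply Hstep; auto. }
  set (w := fun k => step (path k)).
  assert (Hpre : forall k, pre w k = path k).
  { induction k; auto. rewrite pre_S, IHk. reflexivity. }
  assert (Hw : T w).
  { apply NNPP. intros Hnw.
    destruct (hC w (fun k => proj1 (Hstep _ (Hp k))) Hnw) as [k Hk].
    destruct (Hp k 0%nat) as [K2 [T2 [P2 _]]].
    apply Tstar_iff in T2 as [v [Hv Pv]].
    apply (Hk v (hT v Hv)); auto.
    pose proof (prefw_prefl _ _ _ P2 Pv) as Q. unfold prefw in Q.
    rewrite <- (Hpre k), pre_length in Q. rewrite Q. auto. }
  destruct (Hcov w Hw) as [J [HJ PJ]].
  destruct (Hp (length J) 0%nat) as [K2 [_ [P2 [_ H2]]]].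
  apply (H2 J HJ). unfold prefw in PJ. rewrite Hpre in PJ. rewrite <- PJ. auto.
Qed.

Definition rpart T (rho : list nat -> R) K : R :=
  if excluded_middle_informative (Tstar T K) then rho K else 0.

Lemma words1 N : words N 1 = flat_map (fun J => map (fun j => J ++ [j]) (seq 0 N)) [[]].
Proof. reflexivity. Qed.

Lemma rpart_additive N T (hT : forall w, T w -> inSigma N w) rho :
  (forall K, 0 < rho K) ->
  (forall I n, Tstar T I -> psum (fun J => length J = n /\ Tstar T (I ++ J))
       (fun J => rho (I ++ J)) (rho I)) ->
  additive N (rpart T rho).
Proof.
  intros Hpos H3 K. unfold rpart at 1.
  destruct (excluded_middle_informative (Tstar T K)) as [TK|TK].
  - pose proof (H3 K 1%nat TK) as P1.
    assert (P2 : psum (fun J => length J = 1%nat /\ Tstar T (K ++ J)) (fun J => rho (K ++ J))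
              (gs (fun J => rpart T rho (K ++ J)) (words N 1))).
    { apply psum_fin2.
      - apply words_NoDup.
      - intros J [L HJ]. apply in_words. split; auto. intros i Hi.
        apply (Tstar_lt N T hT _ HJ). apply in_or_app; auto.
      - intros J _. unfold rpart. destruct (excluded_middle_informative _); [left; auto|lra].
      - intros J [_ HJ]. unfold rpart. destruct (excluded_middle_informative _); tauto.
      - intros J HJ HP. apply in_words in HJ as [L _]. unfold rpart.
        destruct (excluded_middle_informative _); auto. exfalso; apply HP; auto. }
    rewrite (psum_unique _ _ _ _ P1 P2). rewrite words1, gs_flat_map. simpl.
    rewrite gs_map. lra.
  - rewrite (gs_ext _ (fun _ => 0)); [rewrite gs_zero; auto|].
    intros j _. unfold rpart. destruct (excluded_middle_informative _) as [H|]; auto.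
    exfalso. apply TK. eapply Tstar_prefl; eauto. apply prefl_app.
Qed.

Lemma parta_core N T (hT : forall w, T w -> inSigma N w) (hC : closedT N T) rho :
  (forall K, 0 < rho K) ->
  (forall I n, Tstar T I -> psum (fun J => length J = n /\ Tstar T (I ++ J))
       (fun J => rho (I ++ J)) (rho I)) ->
  forall I n Ic, Tstar T I -> cutset T n I Ic ->
    psum (fun J => Ic (I ++ J)) (fun J => rho (I ++ J)) (rho I).
Proof.
  intros Hpos H3 I n Ic TI HC.
  set (rp := rpart T rho).
  assert (Ha : additive N rp) by (apply rpart_additive; auto).
  assert (Hnn : forall K, 0 <= rp K).
  { intros K. unfold rp, rpart. destruct (excluded_middle_informative _); [left; auto|lra]. }
  assert (Heq : forall K, Tstar T K -> rp K = rho K).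
  { intros K HK. unfold rp, rpart. destruct (excluded_middle_informative _); tauto. }
  assert (Hle : forall K, rp K <= rho K).
  { intros K. unfold rp, rpart. destruct (excluded_middle_informative _); [lra|left; auto]. }
  assert (HT : forall K, rp K <> 0 -> Tstar T K).
  { intros K. unfold rp, rpart. destruct (excluded_middle_informative _); tauto. }
  assert (Hsupp : forall K, rp K <> 0 -> forall i, In i K -> (i < N)%nat).
  { intros K HK. apply (Tstar_lt N T hT). auto. }
  pose proof HC as [Hel [Hcov Hex]].
  unfold psum, is_lub, is_upper_bound. split.
  - intros y [l [Hnd [Hl ->]]]. rewrite lsum_gs.
    rewrite (gs_ext _ (fun J => rp (I ++ J))).
    2:{ intros J HJ. symmetry. apply Heq. apply (Hel _ (Hl J HJ)). }
    rewrite <- (gs_map rp (fun J => I ++ J)). rewrite <- (Heq I TI).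
    apply (antichain_bound N); auto.
    + apply Injective_map_NoDup; auto. intros a b E; apply app_inv_head in E; auto.
    + intros a Ha'. apply in_map_iff in Ha' as [J [<- _]]. apply prefl_app.
    + intros a b Ha' Hb'. apply in_map_iff in Ha' as [J1 [<- HJ1]].
      apply in_map_iff in Hb' as [J2 [<- HJ2]]. apply (cut_antichain T n I Ic); auto.
  - intros b Hb.
    destruct (konig N T hT hC Ic) as [m Hm].
    { intros w Hw. destruct (Hcov w Hw) as [J [HJ [PJ _]]]. exists J; auto. }
    set (k := (Nat.max m (length I) - length I)%nat).
    set (B := filter (fun J => decb (Ic (I ++ J))) (flat_map (fun q => words N q) (seq 0 (S k)))).
    assert (HB : NoDup B).
    { apply NoDup_filter. apply NoDup_flat_map'.
      - apply seq_NoDup.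
      - intros; apply words_NoDup.
      - intros a c y _ _ H1 H2. apply in_words in H1 as [L1 _]. apply in_words in H2 as [L2 _].
        congruence. }
    apply Rle_trans with (lsum (fun J => rho (I ++ J)) B).
    2:{ apply Hb. exists B. split; auto. split; auto.
        intros J HJ. unfold B in HJ. apply filter_In in HJ as [_ HJ]. apply decb_true; auto. }
    rewrite lsum_gs. rewrite <- (Heq I TI).
    rewrite <- (level_sum N rp Ha k I).
    apply Rle_trans with (gs (fun J => rp (I ++ J)) B); [|apply gs_le; auto].
    rewrite <- (gs_map rp (fun J => I ++ J)).
    apply Rle_trans with (gs rp (flat_map (fun J'' => map (fun J3 => I ++ J'' ++ J3)
        (words N (k - length J''))) B)).
    2:{ rewrite gs_flat_map. apply Req_le. apply gs_ext. intros J'' _. rewrite gs_map.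
        rewrite <- (level_sum N rp Ha (k - length J'') (I ++ J'')). apply gs_ext.
        intros; rewrite app_assoc; auto. }
    apply (gs_incl ldec); auto.
    { apply Injective_map_NoDup; [|apply words_NoDup]. intros a c E; apply app_inv_head in E; auto. }
    intros x Hx Hnz. apply in_map_iff in Hx as [J [<- HJ]]. apply in_words in HJ as [LJ _].
    pose proof (HT _ Hnz) as Tx. apply Tstar_iff in Tx as [w [Hw Pw]].
    assert (Tm : Tstar T (pre w m)) by (exists w, m; auto).
    destruct (Hm _ Tm (pre_length w m)) as [K' [HK' PK']].
    assert (Px : prefl K' (I ++ J)).
    { eapply prefl_trans; [eauto|]. unfold prefw in Pw. rewrite <- Pw. apply prefl_pre.
      rewrite length_app. lia. }
    assert (PI : prefl I K') by (eapply cut_ext; eauto; apply prefl_app).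
    destruct PI as [J'' ->]. destruct Px as [J3 E].
    rewrite <- app_assoc in E. apply app_inv_head in E.
    assert (LE : length J = (length J'' + length J3)%nat) by (rewrite E, length_app; auto).
    apply in_flat_map. exists J''. split.
    + unfold B. apply filter_In. split; [|apply decb_true; auto].
      apply in_flat_map. exists (length J''). split.
      * apply in_seq. lia.
      * apply in_words. split; auto. intros i Hi.
        apply (Tstar_lt N T hT (I ++ J'')); [apply (Hel _ HK')|apply in_or_app; auto].
    + apply in_map_iff. exists J3. split; [rewrite E; auto|].
      apply in_words. split; [lia|]. intros i Hi. apply (Hsupp _ Hnz).
      rewrite E. apply in_or_app; right; apply in_or_app; auto.
Qed.

Definition coverP T n I (l : list (list nat)) : Prop :=
  (forall K, In K l -> Tstar T K /\ prefl I K /\ (n <= length K)%nat) /\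
  (forall w, T w -> prefw I w -> exists K, In K l /\ prefw K w).

Definition fset T (rho : list nat -> R) n I (y : R) : Prop :=
  exists l, coverP T n I l /\ y = gs rho l.

Definition is_inf (A : R -> Prop) m :=
  (forall y, A y -> m <= y) /\ (forall m', (forall y, A y -> m' <= y) -> m' <= m).

Definition finf T rho n I := epsilon (inhabits 0) (is_inf (fset T rho n I)).

Lemma inf_exists A : (exists y, A y) -> (forall y, A y -> 0 <= y) -> exists m, is_inf A m.
Proof.
  intros [y0 Hy0] Hnn.
  destruct (completeness (fun z => A (- z))) as [L [HL1 HL2]].
  - exists 0. intros z Hz. specialize (Hnn _ Hz). lra.
  - exists (- y0). rewrite Ropp_involutive; auto.
  - unfold is_upper_bound in *. exists (- L). split.
    + intros y Hy. assert (- y <= L) by (apply HL1; rewrite Ropp_involutive; auto). lra.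
    + intros m' Hm'. assert (L <= - m'); [|lra]. apply HL2. intros z Hz. specialize (Hm' _ Hz). lra.
Qed.

Definition levJ T N I k := filter (fun J => decb (Tstar T (I ++ J))) (words N k).

Lemma levJ_NoDup T N I k : NoDup (levJ T N I k).
Proof. apply NoDup_filter, words_NoDup. Qed.

Lemma in_levJ T N I k J : In J (levJ T N I k) -> Tstar T (I ++ J) /\ length J = k.
Proof.
  unfold levJ. intros H. apply filter_In in H as [H1 H2]. apply (proj1 (decb_true _)) in H2.
  apply in_words in H1. tauto.
Qed.

Lemma lev_cover N T (hT : forall w, T w -> inSigma N w) n I k : (n <= length I + k)%nat ->
  coverP T n I (map (fun J => I ++ J) (levJ T N I k)).
Proof.
  intros Hn. split.
  - intros K HK. apply in_map_iff in HK as [J [<- HJ]]. apply in_levJ in HJ as [TJ LJ].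
    split; auto. split; [apply prefl_app|]. rewrite length_app. lia.
  - intros w Hw PI. set (K := pre w (length I + k)).
    assert (PK : prefl I K).
    { apply (prefw_comp I K w); auto; [apply prefw_pre|unfold K; rewrite pre_length; lia]. }
    assert (TK : Tstar T K) by (exists w, (length I + k)%nat; auto).
    exists K. split; [|apply prefw_pre].
    destruct PK as [J EJ]. rewrite EJ. apply in_map. unfold levJ. apply filter_In. split.
    + apply in_words. split.
      * assert (length K = (length I + k)%nat) by apply pre_length.
        rewrite EJ, length_app in H. lia.
      * intros i Hi. apply (Tstar_lt N T hT K TK). rewrite EJ. apply in_or_app; auto.
    + apply decb_true. rewrite <- EJ. auto.
Qed.

Lemma finf_spec N T (hT : forall w, T w -> inSigma N w) rho (Hpos : forall K, 0 < rho K) n I :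
  is_inf (fset T rho n I) (finf T rho n I).
Proof.
  unfold finf. apply epsilon_spec. apply inf_exists.
  - exists (gs rho (map (fun J => I ++ J) (levJ T N I (n - length I)))).
    exists (map (fun J => I ++ J) (levJ T N I (n - length I))). split; [apply lev_cover; auto; lia|auto].
  - intros y [l [_ ->]]. apply gs_nonneg. intros; left; auto.
Qed.

Lemma finf_nonneg N T (hT : forall w, T w -> inSigma N w) rho (Hpos : forall K, 0 < rho K) n I : 0 <= finf T rho n I.
Proof.
  destruct (finf_spec N T hT rho Hpos n I) as [_ H]. apply H.
  intros y [l [_ ->]]. apply gs_nonneg. intros; left; auto.
Qed.

Lemma finf_notT N T (hT : forall w, T w -> inSigma N w) rho (Hpos : forall K, 0 < rho K) n I : ~ Tstar T I -> finf T rho n I = 0.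
Proof.
  intros nT. destruct (finf_spec N T hT rho Hpos n I) as [H1 H2].
  apply Rle_antisym.
  - apply H1. exists []. split; auto. split.
    + intros K [].
    + intros w Hw P. exfalso. apply nT. apply Tstar_iff. eauto.
  - apply H2. intros y [l [[Hel _] ->]]. destruct l as [|K l]; simpl; [lra|].
    exfalso. destruct (Hel K (or_introl eq_refl)) as [TK [PK _]]. apply nT.
    eapply Tstar_prefl; eauto.
Qed.

Lemma finf_mono N T (hT : forall w, T w -> inSigma N w) rho (Hpos : forall K, 0 < rho K) n I : finf T rho n I <= finf T rho (S n) I.
Proof.
  destruct (finf_spec N T hT rho Hpos (S n) I) as [_ H2]. apply H2.
  intros y [l [[Hel Hcov] ->]]. destruct (finf_spec N T hT rho Hpos n I) as [H1 _].
  apply H1. exists l. split; auto. split; auto.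
  intros K HK. destruct (Hel K HK) as [? [? ?]]. repeat split; auto; lia.
Qed.

Lemma min_pref (l : list (list nat)) w : (exists K, In K l /\ prefw K w) ->
  exists K, In K l /\ prefw K w /\ forall K', In K' l -> prefl K' K -> K' = K.
Proof.
  intros [K0 [H0 P0]].
  assert (G : forall len K, In K l -> prefw K w -> (length K <= len)%nat ->
    exists K, In K l /\ prefw K w /\ forall K', In K' l -> prefl K' K -> K' = K).
  { induction len as [|len IH]; intros K HK PK LK;
    (destruct (classic (exists K', In K' l /\ prefl K' K /\ K' <> K)) as [[K' [HK' [P' ne]]]|Hno];
     [assert (length K' < length K)%nat by
        (pose proof (prefl_len _ _ P'); destruct (Nat.eq_dec (length K') (length K));
         [exfalso; apply ne; symmetry; apply prefl_eq; auto; lia|lia])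
     |exists K; repeat split; auto; intros K' HK' P'; apply NNPP; intro ne; apply Hno; eauto]).
    - lia.
    - apply (IH K'); auto; [eapply prefw_prefl; eauto|lia]. }
  eapply G; eauto.
Qed.

Lemma finf_upper N T (hT : forall w, T w -> inSigma N w) rho (Hpos : forall K, 0 < rho K) E :
  (forall I n Ic, Tstar T I -> cutset T n I Ic ->
    exists S, psum (fun J => Ic (I ++ J)) (fun J => rho (I ++ J)) S /\
      / E * rho I <= S /\ S <= E * rho I) ->
  forall n I, Tstar T I -> finf T rho n I <= E * rho I.
Proof.
  intros H'3 n I TI. set (k := (n - length I)%nat).
  set (Ic := fun K => Tstar T K /\ length K = (length I + k)%nat).
  assert (HC : cutset T n I Ic).
  { split; [|split].
    - intros J [TJ LJ]. split; auto. lia.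
    - intros w Hw. exists (pre w (length I + k)). split; [split; [exists w, (length I + k)%nat; auto|apply pre_length]|].
      split; [apply prefw_pre|]. intros J' [_ LJ'] P'. apply (prefw_len_eq _ _ w); auto.
      apply prefw_pre. rewrite pre_length; auto.
    - apply Tstar_iff in TI as [w [Hw PI]]. exists (pre w (length I + k)).
      split; [split; [exists w, (length I + k)%nat; auto|apply pre_length]|].
      apply (prefw_comp I _ w); auto; [apply prefw_pre|rewrite pre_length; lia]. }
  destruct (H'3 I n Ic TI HC) as [S [[HS1 _] [_ HS2]]].
  apply Rle_trans with S; auto.
  destruct (finf_spec N T hT rho Hpos n I) as [H1 _].
  apply Rle_trans with (gs rho (map (fun J => I ++ J) (levJ T N I k))).
  - apply H1. exists (map (fun J => I ++ J) (levJ T N I k)). split; [apply lev_cover; auto; unfold k; lia|auto].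
  - rewrite gs_map, <- lsum_gs. apply HS1. exists (levJ T N I k). split; [apply levJ_NoDup|].
    split; auto. intros J HJ. apply in_levJ in HJ as [TJ LJ]. split; auto.
    rewrite length_app; lia.
Qed.

Lemma finf_lower N T (hT : forall w, T w -> inSigma N w) rho (Hpos : forall K, 0 < rho K) E :
  (forall I n Ic, Tstar T I -> cutset T n I Ic ->
    exists S, psum (fun J => Ic (I ++ J)) (fun J => rho (I ++ J)) S /\
      / E * rho I <= S /\ S <= E * rho I) ->
  forall n I, Tstar T I -> / E * rho I <= finf T rho n I.
Proof.
  intros H'3 n I TI. destruct (finf_spec N T hT rho Hpos n I) as [_ H2]. apply H2.
  intros y [l [[Hel Hcov] ->]].
  set (m := Nat.max n (length I)).
  set (Ic := fun K => (In K l /\ forall K', In K' l -> prefl K' K -> K' = K) \/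
                      (Tstar T K /\ length K = m /\ ~ prefl I K)).
  assert (HC : cutset T n I Ic).
  { split; [|split].
    - intros K [[HK _]|[TK [LK _]]].
      + destruct (Hel K HK) as [? [? ?]]; auto.
      + split; auto. lia.
    - intros w Hw. destruct (classic (prefw I w)) as [PI|nPI].
      + destruct (min_pref l w (Hcov w Hw PI)) as [K [HK [PK Hmin]]].
        exists K. split; [left; auto|]. split; auto.
        intros J' [[HJ' Hmin']|[_ [LJ' nP]]] PJ'.
        * destruct (Nat.le_ge_cases (length J') (length K)).
          -- apply Hmin; auto. apply (prefw_comp _ _ w); auto.
          -- symmetry. apply Hmin'; auto. apply (prefw_comp _ _ w); auto.
        * exfalso. apply nP. apply (prefw_comp _ _ w); auto. lia.
      + exists (pre w m). split; [right; split; [exists w, m; auto|split; [apply pre_length|]]|].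
        { intros P. apply nPI. eapply prefw_prefl; eauto. apply prefw_pre. }
        split; [apply prefw_pre|].
        intros J' [[HJ' _]|[_ [LJ' _]]] PJ'.
        * exfalso. apply nPI. destruct (Hel J' HJ') as [_ [P _]]. eapply prefw_prefl; eauto.
        * apply (prefw_len_eq _ _ w); auto; [apply prefw_pre|rewrite pre_length; auto].
    - apply Tstar_iff in TI as [w [Hw PI]].
      destruct (min_pref l w (Hcov w Hw PI)) as [K [HK [PK Hmin]]].
      exists K. split; [left; auto|]. apply (Hel K HK). }
  destruct (H'3 I n Ic TI HC) as [S [[_ HS] [HS1 _]]].
  apply Rle_trans with S; auto. apply HS.
  intros y' [lj [Hnd [Hlj ->]]]. rewrite lsum_gs.
  rewrite <- (gs_map rho (fun J => I ++ J)).
  apply (gs_incl ldec).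
  - apply Injective_map_NoDup; auto. intros a b Eq; apply app_inv_head in Eq; auto.
  - intros; left; auto.
  - intros x Hx _. apply in_map_iff in Hx as [J [<- HJ]].
    destruct (Hlj J HJ) as [[H _]|[_ [_ nP]]]; auto. exfalso; apply nP, prefl_app.
Qed.

Lemma finf_add N T (hT : forall w, T w -> inSigma N w) rho (Hpos : forall K, 0 < rho K) n I :
  (length I < n)%nat -> finf T rho n I = gs (fun j => finf T rho n (I ++ [j])) (seq 0 N).
Proof.
  intros Hn. apply Rle_antisym.
  - assert (Happ : forall e, 0 < e -> finf T rho n I <=
        gs (fun j => finf T rho n (I ++ [j])) (seq 0 N) + INR N * e).
    { intros e He.
      assert (G : forall M, (M <= N)%nat -> exists l,
        (forall K, In K l -> Tstar T K /\ prefl I K /\ (n <= length K)%nat) /\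
        (forall w, T w -> prefw I w -> (w (length I) < M)%nat -> exists K, In K l /\ prefw K w) /\
        gs rho l <= gs (fun j => finf T rho n (I ++ [j])) (seq 0 M) + INR M * e).
      { induction M as [|M IH]; intros HM.
        - exists []. split; [intros K []|]. split; [intros; lia|]. simpl; lra.
        - destruct (IH ltac:(lia)) as [l [H1 [H2 H3]]].
          destruct (finf_spec N T hT rho Hpos n (I ++ [M])) as [Hi1 Hi2].
          assert (Hex : exists y, fset T rho n (I ++ [M]) y /\ y < finf T rho n (I ++ [M]) + e).
          { apply NNPP; intro Hno.
            assert (finf T rho n (I ++ [M]) + e <= finf T rho n (I ++ [M])); [|lra].
            apply Hi2. intros y Hy. apply Rnot_lt_le. intro. apply Hno. eauto. }
          destruct Hex as [y [[lM [[HM1 HM2] ->]] Hy]].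
          exists (l ++ lM). split; [|split].
          + intros K HK. apply in_app_or in HK as [HK|HK]; auto.
            destruct (HM1 K HK) as [TK [PK LK]]. repeat split; auto.
            eapply prefl_trans; [apply prefl_app|eauto].
          + intros w Hw PI Hlt. destruct (Nat.eq_dec (w (length I)) M) as [E|ne].
            * destruct (HM2 w Hw) as [K [HK PK]].
              { unfold prefw in *. rewrite length_app. simpl. rewrite Nat.add_1_r, pre_S, PI, E. auto. }
              exists K. split; auto. apply in_or_app; auto.
            * destruct (H2 w Hw PI ltac:(lia)) as [K [HK PK]]. exists K. split; auto.
              apply in_or_app; auto.
          + rewrite gs_app, seq_S, gs_app. simpl. try rewrite S_INR. destruct M; simpl in *; lra. }
      destruct (G N (le_n N)) as [l [H1 [H2 H3]]].
      apply Rle_trans with (gs rho l); auto.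
      apply (finf_spec N T hT rho Hpos n I). exists l. split; auto. split; auto.
      intros w Hw PI. apply H2; auto. apply hT; auto. }
    apply Rnot_lt_le. intro Hlt.
    set (d := finf T rho n I - gs (fun j => finf T rho n (I ++ [j])) (seq 0 N)).
    assert (Hd : 0 < d) by (unfold d; lra).
    pose proof (pos_INR N) as HN.
    set (e := d / (2 * (INR N + 1))).
    assert (He : 0 < e) by (unfold e; apply Rdiv_lt_0_compat; lra).
    assert (E2 : (INR N + 1) * e = d / 2) by (unfold e; field; lra).
    pose proof (Happ e He). unfold d in *. nra.
  - destruct (finf_spec N T hT rho Hpos n I) as [_ H2]. apply H2.
    intros y [l [[Hel Hcov] ->]].
    rewrite (gs_partition rho (length I) N l).
    2:{ intros K HK. destruct (Hel K HK) as [TK [_ LK]].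
        apply (Tstar_lt N T hT K TK). apply nth_In. lia. }
    apply gs_le. intros j Hj. apply (finf_spec N T hT rho Hpos n (I ++ [j])).
    exists (filter (fun K => Nat.eqb (nth (length I) K 0%nat) j) l). split; auto. split.
    + intros K HK. apply filter_In in HK as [HK Ej]. apply Nat.eqb_eq in Ej.
      destruct (Hel K HK) as [TK [PK LK]]. repeat split; auto.
      apply prefl_snoc; auto. lia.
    + intros w Hw P. assert (PI : prefw I w) by (eapply prefw_prefl; [apply prefl_app|eauto]).
      destruct (Hcov w Hw PI) as [K [HK PK]]. exists K. split; auto.
      apply filter_In. split; auto. apply Nat.eqb_eq.
      destruct (Hel K HK) as [_ [_ LK]].
      unfold prefw in PK, P. rewrite <- PK. rewrite nth_pre by lia.
      assert (Q : nth (length I) (I ++ [j]) 0%nat = j) by apply nth_middle.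
      rewrite <- P in Q at 1. rewrite nth_pre in Q; auto. rewrite length_app. simpl. lia.
Qed.

Definition supseq (a : nat -> R) (al : R) : Prop :=
  (forall n, a n <= al) /\ (forall e, 0 < e -> exists n, al - e < a n).

Definition nondecr (a : nat -> R) := forall n, a n <= a (S n).

Lemma nondecr_le a : nondecr a -> forall n m, (n <= m)%nat -> a n <= a m.
Proof.
  intros H n m Hnm. replace m with (n + (m - n))%nat by lia. generalize (m - n)%nat as k.
  induction k; [rewrite Nat.add_0_r; lra|]. rewrite Nat.add_succ_r. specialize (H (n + k)%nat). lra.
Qed.

Lemma supseq_unique a x y : supseq a x -> supseq a y -> x = y.
Proof.
  intros [H1 H2] [H3 H4]. apply Rle_antisym; apply Rnot_lt_le; intro Hl.
  - destruct (H2 (x - y)) as [n Hn]; [lra|]. specialize (H3 n). lra.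
  - destruct (H4 (y - x)) as [n Hn]; [lra|]. specialize (H1 n). lra.
Qed.

Lemma supseq_exists a B : (forall n, a n <= B) -> exists x, supseq a x.
Proof.
  intros HB. destruct (completeness (fun y => exists n, y = a n)) as [L [HL1 HL2]].
  - exists B. intros y [n ->]. auto.
  - exists (a 0%nat), 0%nat; auto.
  - unfold is_upper_bound in *. exists L. split.
    + intros n. apply HL1. eauto.
    + intros e He. apply NNPP. intro Hn. assert (L <= L - e); [|lra].
      apply HL2. intros y [n ->]. apply Rnot_lt_le. intro. apply Hn. eauto.
Qed.

Lemma supseq_shift a x k : nondecr a -> supseq a x -> supseq (fun n => a (n + k)%nat) x.
Proof.
  intros Hm [H1 H2]. split; auto. intros e He. destruct (H2 e He) as [n Hn]. exists n.
  pose proof (nondecr_le a Hm n (n + k) ltac:(lia)). lra.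
Qed.

Lemma supseq_ext a b x : (forall n, a n = b n) -> supseq a x -> supseq b x.
Proof.
  intros E [H1 H2]. split; [intros n; rewrite <- E; auto|].
  intros e He. destruct (H2 e He) as [n Hn]. exists n. rewrite <- E; auto.
Qed.

Lemma supseq_const c : supseq (fun _ => c) c.
Proof. split; [intros; lra|]. intros e He. exists 0%nat. lra. Qed.

Lemma supseq_plus a b x y : nondecr a -> nondecr b -> supseq a x -> supseq b y ->
  supseq (fun n => a n + b n) (x + y).
Proof.
  intros Ha Hb [H1 H2] [H3 H4]. split; [intros n; specialize (H1 n); specialize (H3 n); lra|].
  intros e He. destruct (H2 (e / 2)) as [n1 Hn1]; [lra|]. destruct (H4 (e / 2)) as [n2 Hn2]; [lra|].
  exists (Nat.max n1 n2).
  pose proof (nondecr_le a Ha n1 (Nat.max n1 n2) ltac:(lia)).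
  pose proof (nondecr_le b Hb n2 (Nat.max n1 n2) ltac:(lia)). lra.
Qed.

Lemma supseq_gs {A} (a : A -> nat -> R) (x : A -> R) L :
  (forall j, nondecr (a j)) -> (forall j, supseq (a j) (x j)) ->
  supseq (fun n => gs (fun j => a j n) L) (gs x L).
Proof.
  intros Hm Hs. induction L as [|j L IH]; simpl.
  - apply supseq_const.
  - apply supseq_plus; auto. intros n. apply gs_le. intros; apply Hm.
Qed.

Definition gsup T rho I := epsilon (inhabits 0) (supseq (fun n => finf T rho n I)).

Lemma gsup_spec T rho I : (exists B, forall n, finf T rho n I <= B) ->
  supseq (fun n => finf T rho n I) (gsup T rho I).
Proof.
  intros [B HB]. unfold gsup. apply epsilon_spec. eapply supseq_exists; eauto.
Qed.

Lemma gsup_add N T (hT : forall w, T w -> inSigma N w) rho (Hpos : forall K, 0 < rho K) :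
  (forall I, exists B, forall n, finf T rho n I <= B) ->
  forall I, gsup T rho I = gs (fun j => gsup T rho (I ++ [j])) (seq 0 N).
Proof.
  intros Hbd I. set (k := S (length I)).
  assert (Hmono : forall J, nondecr (fun n => finf T rho n J)).
  { intros J n. apply (finf_mono N T hT rho Hpos). }
  pose proof (supseq_shift _ _ k (Hmono I) (gsup_spec T rho I (Hbd I))) as S1.
  assert (S2 : supseq (fun n => gs (fun j => finf T rho (n + k) (I ++ [j])) (seq 0 N))
                 (gs (fun j => gsup T rho (I ++ [j])) (seq 0 N))).
  { apply (supseq_gs (fun j n => finf T rho (n + k) (I ++ [j]))).
    - intros j n. simpl. apply (finf_mono N T hT rho Hpos).
    - intros j. apply (supseq_shift (fun n => finf T rho n (I ++ [j]))); auto. apply gsup_spec; auto. }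
  apply (supseq_unique _ _ _ S1). eapply supseq_ext; [|exact S2].
  intros n. simpl. symmetry. apply (finf_add N T hT rho Hpos). unfold k. lia.
Qed.

Lemma gsup_notT N T (hT : forall w, T w -> inSigma N w) rho (Hpos : forall K, 0 < rho K) I :
  ~ Tstar T I -> gsup T rho I = 0.
Proof.
  intros nT.
  assert (S0 : supseq (fun n => finf T rho n I) 0).
  { eapply supseq_ext; [|apply supseq_const]. intros n. symmetry. apply (finf_notT N T hT rho Hpos); auto. }
  symmetry. apply (supseq_unique _ _ _ S0). apply gsup_spec. exists 0. intros n.
  rewrite (finf_notT N T hT rho Hpos); auto; lra.
Qed.

Lemma Rpower_pos a b : 0 < Rpower a b.
Proof. unfold Rpower. apply exp_pos. Qed.

Theorem mainTheorem6 (N : nat) (T : (nat -> nat) -> Prop) (X : Type)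
  (d : X -> X -> R) (x : list nat -> X) (r : list nat -> R) (s : R) :
  is_metric d ->
  (forall w, T w -> inSigma N w) ->
  (exists w, T w) ->
  closedT N T ->
  0 < s ->
  (forall I, Tstar T I -> 0 < r I) ->
  (s_tree T X d x r s N -> T'3 T r s 1) /\
  (forall rho C D E, 0 < rho -> 0 < C -> 0 < D -> 0 < E ->
     T1 T X d x r C -> T2 T X d x r D -> T'3 T r s E -> T4 T r -> T5 T r N rho ->
     exists rt : list nat -> R,
       (forall I, Tstar T I ->
          Rpower E (- / s) * r I <= rt I /\ rt I <= Rpower E (/ s) * r I) /\
       s_tree T X d x rt s N).
Proof.
  intros Hd hT Hne hC Hs Hr.
  set (rh := fun K => Rpower (r K) s).
  assert (Hpos : forall K, 0 < rh K) by (intros; apply Rpower_pos).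
  split.
  - intros [_ [rho' [C' [D' [_ [_ [_ [_ [_ [H3 _]]]]]]]]]].
    intros I n Ic TI HC. exists (Rpower (r I) s). split.
    + apply (parta_core N T hT hC rh Hpos H3 I n Ic TI HC).
    + rewrite Rinv_1. lra.
  - intros rho0 C D E Hrho HC HD HE H1 H2 H'3 H4 H5.
    assert (Hbd : forall I, exists B, forall n, finf T rh n I <= B).
    { intros I. destruct (classic (Tstar T I)) as [TI|nTI].
      - exists (E * rh I). intros n. apply (finf_upper N T hT rh Hpos E H'3); auto.
      - exists 0. intros n. rewrite (finf_notT N T hT rh Hpos); auto; lra. }
    set (g := gsup T rh).
    assert (Hg_add : additive N g) by (intros K; apply (gsup_add N T hT rh Hpos Hbd)).
    assert (Hg_up : forall I, Tstar T I -> g I <= E * rh I).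
    { intros I TI. destruct (gsup_spec T rh I (Hbd I)) as [_ Ha].
      apply Rnot_lt_le. intro Hl. destruct (Ha (g I - E * rh I)) as [n Hn]; [unfold g in *; lra|].
      pose proof (finf_upper N T hT rh Hpos E H'3 n I TI). unfold g in *. lra. }
    assert (Hg_lo : forall I, Tstar T I -> / E * rh I <= g I).
    { intros I TI. destruct (gsup_spec T rh I (Hbd I)) as [Hu _].
      pose proof (finf_lower N T hT rh Hpos E H'3 0%nat I TI). specialize (Hu 0%nat).
      unfold g. lra. }
    assert (Hg_nn : forall I, 0 <= g I).
    { intros I. destruct (gsup_spec T rh I (Hbd I)) as [Hu _]. specialize (Hu 0%nat).
      pose proof (finf_nonneg N T hT rh Hpos 0%nat I). unfold g. lra. }
    assert (HiE : 0 < / E) by (apply Rinv_0_lt_compat; auto).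
    assert (Hg_pos : forall I, Tstar T I -> 0 < g I).
    { intros I TI. pose proof (Hg_lo I TI). pose proof (Hpos I).
      assert (0 < / E * rh I) by (apply Rmult_lt_0_compat; auto). lra. }
    set (rt := fun K => Rpower (g K) (/ s)).
    set (p := Rpower E (/ s)). set (q := Rpower E (- / s)).
    assert (Hp : 0 < p) by apply Rpower_pos. assert (Hq : 0 < q) by apply Rpower_pos.
    assert (Hpq : p * q = 1).
    { unfold p, q. rewrite <- Rpower_plus. replace (/ s + - / s) with 0 by ring. apply Rpower_O; auto. }
    assert (Hrs : forall I, Tstar T I -> Rpower (rh I) (/ s) = r I).
    { intros I TI. unfold rh. rewrite Rpower_mult. rewrite Rinv_r by lra. apply Rpower_1; auto. }
    assert (Hbounds : forall I, Tstar T I -> q * r I <= rt I /\ rt I <= p * r I).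
    { intros I TI. pose proof (Hpos I). split.
      - apply Rle_trans with (Rpower (/ E * rh I) (/ s)).
        + rewrite <- Rpower_mult_distr; auto. rewrite Hrs; auto. apply Req_le. f_equal.
          unfold q, Rpower. rewrite ln_Rinv; auto. f_equal. ring.
        + apply Rle_Rpower_l; [left; apply Rinv_0_lt_compat; auto|].
          split; [apply Rmult_lt_0_compat; auto|]. apply Hg_lo; auto.
      - apply Rle_trans with (Rpower (E * rh I) (/ s)).
        + apply Rle_Rpower_l; [left; apply Rinv_0_lt_compat; auto|]. split; [apply Hg_pos; auto|].
          apply Hg_up; auto.
        + rewrite <- Rpower_mult_distr; auto. rewrite Hrs; auto. unfold p; lra. }
    assert (Hrq : forall I, Tstar T I -> q * rt I <= r I).
    { intros I TI. destruct (Hbounds I TI) as [_ B].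
      apply Rle_trans with (q * (p * r I)); [apply Rmult_le_compat_l; lra|].
      rewrite <- Rmult_assoc, (Rmult_comm q p), Hpq. lra. }
    assert (Hrp : forall I, Tstar T I -> r I <= p * rt I).
    { intros I TI. destruct (Hbounds I TI) as [B _].
      apply Rle_trans with (p * (q * r I)); [|apply Rmult_le_compat_l; lra].
      rewrite <- Rmult_assoc, Hpq. lra. }
    exists rt. split; [exact Hbounds|]. split.
    { intros; apply Rpower_pos. }
    exists (rho0 * q * q), (C * q), (D * p).
    split; [apply Rmult_lt_0_compat; [apply Rmult_lt_0_compat|]; auto|].
    split; [apply Rmult_lt_0_compat; auto|].
    split; [apply Rmult_lt_0_compat; auto|].
    split; [|split; [|split; [|split]]].
    + intros I J TI TJ Hinc. pose proof (H1 I J TI TJ Hinc).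
      pose proof (Hrq I TI). pose proof (Hrq J TJ). apply Rle_ge.
      apply Rge_le in H. nra.
    + intros I J1 J2 TI T1' T2'. pose proof (H2 I J1 J2 TI T1' T2'). pose proof (Hrp I TI). nra.
    + intros I n TI.
      assert (Hrtg : forall K, Tstar T K -> Rpower (rt K) s = g K).
      { intros K TK. unfold rt. rewrite Rpower_mult. rewrite Rinv_l by lra. apply Rpower_1; auto. }
      rewrite (Hrtg I TI). rewrite <- (level_sum N g Hg_add n I).
      apply psum_fin2.
      * apply words_NoDup.
      * intros J [LJ TJ]. apply in_words. split; auto. intros i Hi.
        apply (Tstar_lt N T hT _ TJ). apply in_or_app; auto.
      * intros; auto.
      * intros J [_ TJ]. symmetry. auto.
      * intros J HJ HP. apply in_words in HJ as [LJ _]. apply (gsup_notT N T hT rh Hpos).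
        intro; apply HP; auto.
    + intros eps Heps. destruct (H4 (eps / p)) as [n Hn]; [apply Rdiv_lt_0_compat; auto|].
      exists n. intros I TI LI. pose proof (Hn I TI LI). destruct (Hbounds I TI) as [_ B].
      apply Rle_lt_trans with (p * r I); auto.
      apply Rlt_le_trans with (p * (eps / p)); [apply Rmult_lt_compat_l; auto|apply Req_le; field; lra].
    + intros I j Hj TIj. assert (TI : Tstar T I) by (eapply Tstar_prefl; eauto; apply prefl_app).
      pose proof (H5 I j Hj TIj). apply Rge_le in H.
      destruct (Hbounds _ TIj) as [B1 _]. pose proof (Hrq I TI). pose proof (Hr I TI).
      apply Rle_ge. apply Rle_trans with (q * r (I ++ [j])); auto.
      apply Rle_trans with (q * (rho0 * r I)); [|apply Rmult_le_compat_l; lra].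
      replace (rho0 * q * q * rt I) with (q * (rho0 * (q * rt I))) by ring.
      apply Rmult_le_compat_l; [lra|]. apply Rmult_le_compat_l; lra.
Qed.
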